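(* Let $d,n\ge1$, $L\ge0$, let $p_x,p_w$ be distributions on $\mathbb{R}^d$, let $x^{(1)},\dots,x^{(n+1)}$ be i.i.d. from $p_x$, $w_\star\sim p_w$, and $y^{(i)}=\langle w_\star,x^{(i)}\rangle$ for $i=1,\dots,n+1$. Let $$Z_0=\begin{bmatrix} x^{(1)} & \cdots & x^{(n)} & x^{(n+1)}\\ y^{(1)} & \cdots & y^{(n)} & 0\end{bmatrix},\qquad \bar Z_0=\begin{bmatrix} x^{(1)} & \cdots & x^{(n)} & x^{(n+1)}\\ y^{(1)} & \cdots & y^{(n)} & y^{(n+1)}\end{bmatrix},$$ and $M=\begin{bmatrix} I_n & 0\\ 0& 0\end{bmatrix}\in\mathbb{R}^{(n+1)\times(n+1)}$. For matrices $A_i,B_i\in\mathbb{R}^{d\times d}$ with $A_i$ symmetric ($i=0,\dots,L-1$), let $P_i=\begin{bmatrix}B_i&0\\0&1\end{bmatrix}$, $Q_i=\begin{bmatrix}A_i&0\\0&0\end{bmatrix}$, and define $Z_{i+1}=Z_i+\frac1nP_iZ_iM(Z_i^\top Q_iZ_i)$ and $\bar Z_{i+1}=\bar Z_i+\frac1nP_i\bar Z_iM(\bar Z_i^\top Q_i\bar Z_i)$. Let $\bar Y_L\in\mathbb{R}^{1\times(n+1)}$ be the last row of $\bar Z_L$. Then (assuming the expectations are finite) $$\mathbb{E}\Big[\big([Z_L]_{d+1,n+1}+w_\star^\top x^{(n+1)}\big)^2\Big]=\mathbb{E}\Big[\mathrm{Tr}\big((I-M)\bar Y_L^\top\bar 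Y_L(I-M)\big)\Big].$$
   Context: $[X]_{i,j}$ denotes the $(i,j)$ entry of a matrix; $I=I_{n+1}$. *)

(* Defs.v *)
From HB Require Import structures.
From mathcomp Require Import all_boot all_order all_algebra.
From mathcomp Require Import all_classical all_reals all_analysis.
Set Implicit Arguments. Unset Strict Implicit. Unset Printing Implicit Defensive.
Import Order.TTheory GRing.Theory Num.Theory.
Local Open Scope ring_scope.
Local Open Scope classical_set_scope.

Definition mutually_independent {d dV} {T : measurableType d}
  {V : measurableType dV} {R : realType} (P : probability T R)
  {I : finType} (X : I -> T -> V) : Prop :=
  forall (J : {set I}) (A : I -> set V),
    (forall j, j \in J -> measurable (A j)) ->
    P (\bigcap_(j in [set j | j \in J]) (X j @^-1` A j)) =
    (\prod_(j in J) P (X j @^-1` A j))%E.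

Definition has_law {d dV} {T : measurableType d} {V : measurableType dV}
  {R : realType} (P : probability T R) (X : T -> V) (mu : probability V R) :=
  forall A : set V, measurable A -> P (X @^-1` A) = mu A.

Definition tvec {R : realType} {d : nat} (v : d.-tuple R) : 'cV[R]_d :=
  \col_k tnth v k.

Definition inner {R : realType} {d : nat} (w x : 'cV[R]_d) : R :=
  \sum_(k < d) w k 0 * x k 0.

Definition Mmask {R : realType} (n : nat) : 'M[R]_(n + 1) :=
  block_mx 1%:M 0 0 0.

Definition Pmat {R : realType} {d : nat} (B : 'M[R]_d) : 'M[R]_(d + 1) :=
  block_mx B 0 0 1%:M.
Definition Qmat {R : realType} {d : nat} (A : 'M[R]_d) : 'M[R]_(d + 1) :=
  block_mx A 0 0 0.

Fixpoint iterZ {R : realType} {d n : nat} (A B : nat -> 'M[R]_d)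
  (Z0 : 'M[R]_(d + 1, n + 1)) (i : nat) : 'M[R]_(d + 1, n + 1) :=
  match i with
  | 0 => Z0
  | i'.+1 =>
      let Z := iterZ A B Z0 i' in
      Z + n%:R^-1 *: (Pmat (B i') *m Z *m Mmask n *m (Z^T *m Qmat (A i') *m Z))
  end.

Definition datamx {R : realType} {d n : nat} (x : 'I_(n + 1) -> 'cV[R]_d)
  (y : 'I_(n + 1) -> R) (ylast : R) : 'M[R]_(d + 1, n + 1) :=
  block_mx (\matrix_(k < d, j < n) x (lshift 1 j) k 0)
           (x (rshift n ord0))
           (\row_(j < n) y (lshift 1 j))
           (ylast%:M).

(* Main.v *)
Require Import Defs.
From HB Require Import structures.
From mathcomp Require Import all_boot all_order all_algebra.
From mathcomp Require Import all_classical all_reals all_analysis.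
Import Order.TTheory GRing.Theory Num.Theory.
Local Open Scope ring_scope.

Section S.
Variables (R : realType) (d n : nat) (A B : nat -> 'M[R]_d).
Definition Emx (c : R) : 'M[R]_(d + 1, n + 1) := block_mx 0 0 0 c%:M.

Lemma EM c : Emx c *m Mmask n = 0.
Proof. by rewrite /Emx /Mmask mulmx_block !mul0mx !mulmx0 !addr0 block_mx0. Qed.

Lemma QE c (Q : 'M[R]_d) : Qmat Q *m Emx c = 0.
Proof. by rewrite /Emx /Qmat mulmx_block !mul0mx !mulmx0 !addr0 block_mx0. Qed.

Lemma EQ c (Q : 'M[R]_d) : (Emx c)^T *m Qmat Q = 0.
Proof. by rewrite /Emx /Qmat tr_block_mx mulmx_block !trmx0 !mul0mx !mulmx0 !addr0 block_mx0. Qed.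

Lemma iterE (Z : 'M[R]_(d+1, n+1)) c i :
  iterZ A B (Z + Emx c) i = iterZ A B Z i + Emx c.
Proof.
elim: i => [//|i IH] /=.
rewrite IH.
set Z' := iterZ A B Z i.
have H1 : Pmat (B i) *m (Z' + Emx c) *m Mmask n = Pmat (B i) *m Z' *m Mmask n.
  by rewrite mulmxDr mulmxDl -(mulmxA _ (Emx c)) EM mulmx0 addr0.
have H2 : (Z' + Emx c)^T *m Qmat (A i) *m (Z' + Emx c) = Z'^T *m Qmat (A i) *m Z'.
  rewrite (raddfD (@trmx R _ _)) mulmxDl EQ addr0 mulmxDr -(mulmxA _ _ (Emx c)) QE mulmx0 addr0 //.
rewrite H1 H2; by rewrite addrAC.
Qed.
End S.
Theorem lemma5 (R : realType) (dT : measure_display) (T : measurableType dT)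
  (Pr : probability T R) (d n L : nat) (hd : (1 <= d)%N) (hn : (1 <= n)%N)
  (px pw : probability (d.-tuple R) R)
  (X : 'I_(n + 1) -> T -> d.-tuple R) (W : T -> d.-tuple R)
  (A B : nat -> 'M[R]_d) :
  (forall i, measurable_fun setT (X i)) ->
  measurable_fun setT W ->
  mutually_independent Pr
    (fun o : option 'I_(n + 1) => match o with Some i => X i | None => W end) ->
  (forall i, has_law Pr (X i) px) ->
  has_law Pr W pw ->
  (forall i, (i < L)%N -> (A i)^T = A i) ->
  let x := fun i w => tvec (X i w) in
  let wstar := fun w => tvec (W w) in
  let y := fun i w => inner (wstar w) (x i w) in
  let nlast := rshift n (@ord0 0) in
  let dlast := rshift d (@ord0 0) in
  let Z0 := fun w => datamx (x ^~ w) (y ^~ w) 0 in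
  let Zb0 := fun w => datamx (x ^~ w) (y ^~ w) (y nlast w) in
  let ZL := fun w => iterZ A B (Z0 w) L in
  let YbL := fun w => dsubmx (iterZ A B (Zb0 w) L) in
  let lhs := fun w => (ZL w dlast nlast + ((wstar w)^T *m x nlast w) ord0 ord0) ^+ 2 in
  let rhs := fun w => \tr ((1%:M - Mmask n) *m ((YbL w)^T *m YbL w) *m (1%:M - Mmask n)) in
  Pr.-integrable setT (EFin \o lhs) ->
  Pr.-integrable setT (EFin \o rhs) ->
  ('E_Pr[lhs] = 'E_Pr[rhs])%E.
Proof.
move=> _ _ _ _ _ _ x wstar y nlast dlast Z0 Zb0 ZL YbL lhs rhs _ _.
suff -> : lhs = rhs by [].
apply/funext => w.
have HZ : Zb0 w = Z0 w + Emx R d n (y nlast w).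
  rewrite /Zb0 /Z0 /datamx /Emx add_block_mx !addr0; congr block_mx; apply/matrixP => i j; rewrite !mxE; case: (i == j); rewrite ?mulr1n ?mulr0n ?add0r ?addr0 //.
have HD : (1%:M - Mmask n : 'M[R]_(n+1)) = block_mx 0 0 0 1%:M.
  rewrite /Mmask (scalar_mx_block n 1) opp_block_mx add_block_mx !subrr !oppr0 !addr0 //.
rewrite /rhs /=. rewrite HD.
set C := ((YbL w)^T *m _).
rewrite -(submxK C) !mulmx_block ?mul0mx ?mulmx0 ?add0r ?addr0 ?mul1mx ?mulmx1.
rewrite mxtrace_block mxtrace0 add0r trace_mx11 /C /lhs /YbL /ZL HZ iterE.
have E0 : forall (C : 'M[R]_(n+1)), drsubmx C 0 0 = C (rshift n 0) (rshift n 0).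
  by move=> C0; rewrite !mxE.
have E3 : forall (M N : 'M[R]_(d+1,n+1)) i j, (M + N) i j = M i j + N i j.
  by move=> *; by rewrite mxE.
have E1 : forall (Y : 'rV[R]_(n+1)) j, (Y^T *m Y) j j = Y 0 j ^+ 2.
  by move=> Y j; rewrite mxE big_ord1 !mxE expr2.
have E2 : forall (M : 'M[R]_(d+1,n+1)) j, dsubmx M 0 j = M (rshift d 0) j.
  by move=> M j; by rewrite mxE.
rewrite E0 E1 E2 E3 /Emx block_mxEdr.
congr (_ ^+ 2); congr (_ + _); rewrite [RHS]mxE eqxx mulr1n /y /inner [LHS]mxE.
by apply: eq_bigr => j _; rewrite mxE.
Qed.
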